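(* Let $m>1$, $d\in\{2,3,\ldots\}$, consider a Galton–Watson process with offspring distribution supported in $\{0,\ldots,d\}$ with mean $m$, and set $a=\frac{8m}{m-1}$. Then for every positive integer $r$ and every $n\in\mathbb{N}$, \[ \mathbb{P}(W_n>5adr)\le e^{-(\log 3-1)r}+e^{-\frac23 r}. \]
   Context: $(Z_n)_{n\ge 0}$ is a Galton–Watson process with $Z_0=1$, $Z_{n+1}=\sum_{i=1}^{Z_n}\xi_{n,i}$ with $(\xi_{n,i})$ i.i.d. distributed as $Z_1$, $m=\mathbb{E}[Z_1]$, and $W_n=Z_n/m^n$. *)

(* Defs.v *)
From HB Require Import structures.
From mathcomp Require Import all_boot all_order all_algebra.
From mathcomp Require Import all_classical all_reals all_analysis.
Set Implicit Arguments. Unset Strict Implicit. Unset Printing Implicit Defensive.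
Import Order.TTheory GRing.Theory Num.Theory.
Local Open Scope classical_set_scope.
Local Open Scope ring_scope.

(* Generation sizes of a Galton--Watson process built from offspring
   variables xi n i (the i-th individual of generation n):
   Z_0 = 1, Z_{n+1} = sum_{i < Z_n} xi n i. *)
Fixpoint GW_Z {T : Type} (xi : nat -> nat -> T -> nat) (n : nat) (t : T) : nat :=
  match n with
  | 0 => 1
  | n'.+1 => \sum_(i < GW_Z xi n' t) xi n' i t
  end.

Definition mutually_independent_nat {d : measure_display} {T : measurableType d}
  {R : realType} (P : probability T R) (X : nat * nat -> T -> nat) : Prop :=
  forall (s : seq (nat * nat)) (k : nat * nat -> nat), uniq s ->
    P (\bigcap_(j in [set` s]) [set t | X j t = k j])
    = (\prod_(j <- s) P [set t | X j t = k j])%E.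

(* Main.v *)
From HB Require Import structures.
From mathcomp Require Import all_boot all_order all_algebra.
From mathcomp Require Import all_classical all_reals all_analysis.
Require Import Defs.
From mathcomp Require Import ring lra zify.
Import Order.TTheory GRing.Theory Num.Theory.
Local Open Scope classical_set_scope.
Local Open Scope ring_scope.

Section GW.
Variables (R : realType) (dsp : measure_display) (T : measurableType dsp)
  (P : probability T R) (xi : nat -> nat -> T -> nat).
Hypothesis hmeas : forall n i k, measurable [set t | xi n i t = k].

Definition pr (E : set T) : R := fine (P E).

Lemma prE E : measurable E -> P E = (pr E)%:E.
Proof. by move=> mE; rewrite /pr fineK //; apply: fin_num_measure. Qed.

Lemma pr_ge0 E : 0 <= pr E.
Proof. by rewrite /pr; apply: fine_ge0; apply: measure_ge0. Qed.

Lemma decomp (E B : set T) (F : nat -> set T) (N : nat) :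
  measurable E -> measurable B -> (forall i, measurable (F i)) ->
  P B = 0%E ->
  (forall i j t, F i t -> F j t -> i = j) ->
  (forall t, E t -> ~ B t -> exists2 i, (i < N)%N & F i t) ->
  pr E = \sum_(i < N) pr (E `&` F i).
Proof.
move=> mE mB mF PB0 disj cov.
have mU : measurable (\big[setU/set0]_(i < N) (E `&` F i)).
  by apply: bigsetU_measurable => i _; exact: measurableI.
have eqE : E = (\big[setU/set0]_(i < N) (E `&` F i)) `|` (E `&` B).
  apply/seteqP; split => t.
  - move=> Et; have [Bt|nBt] := pselect (B t); first by right.
    left; have [i iN Fi] := cov t Et nBt.
    by rewrite -(bigcup_mkord N (fun i => E `&` F i)); exists i.
  - case=> [|[]//]; by rewrite -(bigcup_mkord N (fun i => E `&` F i)) => -[i _ []].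
have mEB : measurable (E `&` B) by exact: measurableI.
rewrite {1}eqE.
apply: EFin_inj; rewrite -prE; last exact: measurableU.
rewrite measureU0 //; last first.
  by apply: (subset_measure0 mEB mB) => // t [].
rewrite -sumEFin.
rewrite (@measure_semi_additive_ord_I _ _ _ P (fun i => E `&` F i) N) //.
- by apply: eq_bigr => i _ /=; rewrite prE //; apply: measurableI.
- by move=> k _ /=; exact: measurableI.
- move=> i j _ _ [t [[_ Fi] [_ Fj]]]; exact: (disj i j t).
Qed.

Definition pt (L : seq (nat * nat)) (k : nat * nat -> nat) : set T :=
  \bigcap_(j in [set` L]) [set t | xi j.1 j.2 t = k j].

Lemma pt_nil k : pt [::] k = setT.
Proof. by apply/seteqP; split => t // _ j. Qed.

Lemma pt_cons l L k : pt (l :: L) k = [set t | xi l.1 l.2 t = k l] `&` pt L k.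
Proof.
apply/seteqP; split => t.
- move=> H; split; first by apply: H; rewrite /= inE eqxx.
  by move=> j jL; apply: H; rewrite /= inE jL orbT.
- move=> [H1 H2] j; rewrite /= inE => /orP [/eqP ->//|jL]; exact: H2.
Qed.

Lemma pt_ext L k k' : {in L, k =1 k'} -> pt L k = pt L k'.
Proof.
move=> e; apply/seteqP; split => t H j jL /=.
  by rewrite -e //; apply: H.
by rewrite e //; apply: H.
Qed.

Lemma mpt L k : measurable (pt L k).
Proof.
elim: L => [|l L IH]; first by rewrite pt_nil.
by rewrite pt_cons; apply: measurableI.
Qed.

Hypothesis hindep : mutually_independent_nat P (fun j => xi j.1 j.2).
Hypothesis hident : forall n i k, P [set t | xi n i t = k] = P [set t | xi 0%N 0%N t = k].

Definition p (a : nat) : R := pr [set t | xi 0%N 0%N t = a].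

Lemma prX n i a : pr [set t | xi n i t = a] = p a.
Proof. by rewrite /p /pr hident. Qed.

Lemma Ppt L k : uniq L -> pr (pt L k) = \prod_(j <- L) p (k j).
Proof.
move=> uL; apply: EFin_inj; rewrite -prE; last exact: mpt.
rewrite -prodEFin; rewrite /pt (hindep L k uL).
by apply: eq_bigr => j _; rewrite prE // prX.
Qed.

Lemma mconst (Q : Prop) : measurable [set _ : T | Q].
Proof.
have [q|nq] := pselect Q.
  by have -> : [set _ : T | Q] = setT by apply/seteqP; split.
by have -> : [set _ : T | Q] = set0 by apply/seteqP; split.
Qed.

Lemma pr_set0 : pr set0 = 0.
Proof. by rewrite /pr measure0. Qed.

Lemma pr_setT : pr setT = 1.
Proof. by rewrite /pr probability_setT. Qed.

Variable d : nat.
Hypothesis hsupp : P [set t | (xi 0%N 0%N t <= d)%N] = 1%E.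

Definition A n j := [set t | GW_Z xi n t = j].
Definition Sm n c t := (\sum_(i < c) xi n i t)%N.
Definition Sv n c s := [set t | Sm n c t = s].

Lemma Sv0 n s : Sv n 0 s = [set _ | 0%N = s].
Proof. by apply/seteqP; split => t; rewrite /Sv /Sm /= big_ord0. Qed.

Lemma Sv_rec n c s : Sv n c.+1 s =
  \bigcup_(b in `I_s.+1) (Sv n c b `&` [set t | xi n c t = (s - b)%N]).
Proof.
apply/seteqP; split => t; rewrite /Sv /Sm /= big_ord_recr /=.
- move=> H; exists (\sum_(i < c) xi n i t)%N.
    by rewrite /= -H ltnS leq_addr.
  split; first by [].
  by rewrite /= -H addKn.
- move=> [b /= bs [Hb Hx]]; rewrite Hb Hx subnKC //; by rewrite -ltnS.
Qed.

Lemma mSv n c s : measurable (Sv n c s).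
Proof.
elim: c s => [|c IH] s; first by rewrite Sv0; apply: mconst.
rewrite Sv_rec; apply: bigcup_measurable => b _; apply: measurableI => //.
Qed.

Lemma A_rec n j : A n.+1 j = \bigcup_j' (A n j' `&` Sv n j' j).
Proof.
apply/seteqP; split => t /=.
- by move=> H; exists (GW_Z xi n t) => //.
- by move=> [j' _ [H1 H2]]; rewrite /Sv /Sm -H1 in H2.
Qed.

Lemma mA n j : measurable (A n j).
Proof.
elim: n j => [|n IH] j; first by rewrite /A /=; apply: mconst.
rewrite A_rec; apply: bigcupT_measurable => j'; apply: measurableI => //.
exact: mSv.
Qed.

Definition Bad n := [set t | (d ^ n < GW_Z xi n t)%N].

Lemma mBad n : measurable (Bad n).
Proof.
have -> : Bad n = \bigcup_(j in [set j | (d ^ n < j)%N]) A n j.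
  apply/seteqP; split => t /=; first by move=> H; exists (GW_Z xi n t).
  by move=> [j /= H]; rewrite /A /Bad /= => ->.
by apply: bigcup_measurable => j _; exact: mA.
Qed.

Lemma prLe n i : pr [set t | (xi n i t <= d)%N] = \sum_(a < d.+1) p a.
Proof.
have mE : measurable [set t | (xi n i t <= d)%N].
  have -> : [set t | (xi n i t <= d)%N] = \bigcup_(a in `I_d.+1) [set t | xi n i t = a].
    apply/seteqP; split => t /=; first by move=> H; exists (xi n i t).
    by move=> [a /= H ->].
  by apply: bigcup_measurable.
rewrite (@decomp _ set0 (fun a => [set t | xi n i t = a]) d.+1) //.
- apply: eq_bigr => a _; rewrite -(prX n i); congr pr.
  apply/seteqP; split => t /=; first by case.
  by move=> H; split => //; rewrite H -ltnS.
- by move=> a b t /= Ha Hb; rewrite -Ha -Hb.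
- by move=> t /= H _; exists (xi n i t).
Qed.

Lemma sump : \sum_(a < d.+1) p a = 1.
Proof. by rewrite -(prLe 0 0) /pr hsupp. Qed.

Lemma Pgt n i : P [set t | (d < xi n i t)%N] = 0%E.
Proof.
have mE : measurable [set t | (xi n i t <= d)%N].
  have -> : [set t | (xi n i t <= d)%N] = \bigcup_(a in `I_d.+1) [set t | xi n i t = a].
    apply/seteqP; split => t /=; first by move=> H; exists (xi n i t).
    by move=> [a /= H ->].
  by apply: bigcup_measurable.
have -> : [set t | (d < xi n i t)%N] = ~` [set t | (xi n i t <= d)%N].
  by apply/seteqP; split => t /=; rewrite ltnNge => /negP.
by rewrite probability_setC // prE // prLe sump subee.
Qed.

Lemma mgt n i : measurable [set t | (d < xi n i t)%N].
Proof.
have -> : [set t | (d < xi n i t)%N] = \bigcup_(a in [set a | (d < a)%N]) [set t | xi n i t = a].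
  apply/seteqP; split => t /=; first by move=> H; exists (xi n i t).
  by move=> [a /= H ->].
by apply: bigcup_measurable.
Qed.

Lemma pd0 a : (d < a)%N -> p a = 0.
Proof.
move=> da; rewrite /p /pr.
rewrite (@subset_measure0 _ _ _ P _ [set t | (d < xi 0%N 0%N t)%N]) //.
- exact: mgt.
- by move=> t /= ->.
- exact: Pgt.
Qed.

Definition Pp : {poly R} := \poly_(a < d.+1) p a.

Lemma coefPp a : Pp`_a = p a.
Proof.
rewrite /Pp coef_poly; case: ifP => // /negbT; rewrite -leqNgt => h.
by rewrite pd0.
Qed.

Definition ICprop n := forall L k j, uniq L -> (forall l, l \in L -> (n <= l.1)%N) ->
  pr (A n j `&` pt L k) = pr (A n j) * \prod_(l <- L) p (k l).

Lemma SC n : ICprop n -> forall c L k j' s, uniq L ->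
  (forall l, l \in L -> (n < l.1)%N \/ (l.1 = n /\ (c <= l.2)%N)) ->
  pr (A n j' `&` Sv n c s `&` pt L k) = pr (A n j') * (Pp ^+ c)`_s * \prod_(l <- L) p (k l).
Proof.
move=> IC; elim=> [|c IH] L k j' s uL HL.
  rewrite expr0 coef1 Sv0; case: (eqVneq s 0%N) => [->|ns].
    have -> : [set _ : T | 0%N = 0%N] = setT by apply/seteqP; split.
    rewrite setIT IC //=; first by rewrite mulr1.
    by move=> l /HL [/ltnW //|[-> _]] //.
  have -> : A n j' `&` [set _ : T | 0%N = s] `&` pt L k = set0.
    by apply/seteqP; split => // t [[_ /= e] _]; move: ns; rewrite -e eqxx.
  by rewrite pr_set0 mulr0 mul0r.
rewrite (@decomp _ set0 (Sv n c) s.+1) //; first last.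
- move=> t [[_ H] _] _; exists (Sm n c t) => //.
  by move: H; rewrite /Sv /Sm /= big_ord_recr /= => <-; rewrite ltnS leq_addr.
- by move=> a b t /= Ha Hb; rewrite -Ha -Hb.
- exact: mSv.
- apply: measurableI; last exact: mpt.
  by apply: measurableI; [exact: mA | exact: mSv].
rewrite exprSr coefM !big_distrr big_distrl /=; apply: eq_bigr => -[b hb] _ /=.
set k' := fun l => if l == (n, c) then (s - b)%N else k l.
have nL : (n, c) \notin L.
  by apply/negP => /HL /= [|[_]]; rewrite ?ltnn.
have -> : A n j' `&` Sv n c.+1 s `&` pt L k `&` Sv n c b =
    A n j' `&` Sv n c b `&` pt ((n, c) :: L) k'.
  rewrite pt_cons (@pt_ext L k' k); last first.
    by move=> l lL; rewrite /k'; case: eqP => // e; move: nL; rewrite -e lL.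
  rewrite /k' /= eqxx; apply/seteqP; split => t /=.
  - move=> [[[Ha H1] H2] H3]; split; [split=> // | split=> //].
    move: H1; rewrite /Sv /Sm /= big_ord_recr /= => <-.
    by move: H3; rewrite /Sv /Sm /= => ->; rewrite addKn.
  - move=> [[Ha H3] [H1 H2]]; split; [split; [split=> // |] | ] => //.
    rewrite /Sv /Sm /= big_ord_recr /=; move: H3; rewrite /Sv /Sm /= => ->.
    by rewrite H1 subnKC.
rewrite IH //; first last.
- move=> l; rewrite inE => /orP [/eqP -> /=|/HL [|[e h]]]; [by right | by left|].
  by right; split => //; apply: ltnW.
- by rewrite /= nL uL.
rewrite big_cons /k' eqxx coefPp.
rewrite (@eq_big_seq _ _ _ _ _ (fun l => p (if l == (n, c) then (s - b)%N else k l)) (fun l => p (k l))); last first.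
  by move=> l lL; case: eqP => // e; move: nL; rewrite -e lL.
ring.
Qed.

Lemma null_bigU N (G : nat -> set T) : (forall i, measurable (G i)) ->
  (forall i, P (G i) = 0%E) -> P (\big[setU/set0]_(i < N) G i) = 0%E.
Proof.
move=> mG PG; elim: N => [|N IH]; first by rewrite big_ord0 measure0.
rewrite big_ord_recr /= measureU0 //.
all: try by [apply: bigsetU_measurable => i _ | exact: PG].
Qed.

Lemma PBad n : P (Bad n) = 0%E.
Proof.
elim: n => [|n IH].
  have -> : Bad 0 = set0 by apply/seteqP; split => t //=; rewrite /Bad /= expn0 ltnn.
  exact: measure0.
have mU : measurable (\big[setU/set0]_(i < d ^ n) [set t | (d < xi n i t)%N]).
  by apply: bigsetU_measurable => i _; exact: mgt.
apply: (@subset_measure0 _ _ _ P _ (Bad n `|` \big[setU/set0]_(i < d ^ n) [set t | (d < xi n i t)%N])).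
- exact: mBad.
- by apply: measurableU; first exact: mBad.
- move=> t /= Hb; have [h|h] := pselect (Bad n t); first by left.
  right; rewrite -(bigcup_mkord (d ^ n) (fun i => [set t | (d < xi n i t)%N])).
  apply: contrapT => H.
  have H' : forall i, (i < d ^ n)%N -> (xi n i t <= d)%N.
    by move=> i il; rewrite leqNgt; apply/negP => hi; apply: H; exists i.
  move: Hb; rewrite /Bad /= ltnNge => /negP; apply.
  have hz : (GW_Z xi n t <= d ^ n)%N by rewrite leqNgt; apply/negP.
  apply: (@leq_trans (\sum_(i < GW_Z xi n t) d)%N).
    by apply: leq_sum => i _; apply: H'; exact: (leq_trans (ltn_ord i) hz).
  rewrite sum_nat_const card_ord expnSr.
  exact: leq_mul.
- have h0 := @null_bigU (d ^ n) (fun i => [set t | (d < xi n i t)%N]) (fun i => mgt n i) (fun i => Pgt n i).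
  have := @measureU0 _ _ _ P (Bad n) _ (mBad n) mU h0.
  by move=> h; exact: (etrans h IH).
Qed.

Lemma R1 n : ICprop n -> forall L k j, uniq L -> (forall l, l \in L -> (n < l.1)%N) ->
  pr (A n.+1 j `&` pt L k) =
  (\sum_(j' < (d ^ n).+1) pr (A n j') * (Pp ^+ j')`_j) * \prod_(l <- L) p (k l).
Proof.
move=> IC L k j uL HL.
rewrite (@decomp _ (Bad n) (A n) (d ^ n).+1); first last.
- move=> t _ hb; exists (GW_Z xi n t) => //.
  by rewrite ltnS leqNgt; apply/negP.
- by move=> a b t /= Ha Hb; rewrite -Ha -Hb.
- exact: PBad.
- exact: mA.
- exact: mBad.
- by apply: measurableI; [exact: mA | exact: mpt].
rewrite big_distrl; apply: eq_bigr => -[j' hj'] _ /=.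
have -> : A n.+1 j `&` pt L k `&` A n j' = A n j' `&` Sv n j' j `&` pt L k.
  apply/seteqP; split => t /=.
  - move=> [[H1 H2] H3]; split => //; split => //.
    by move: H1; rewrite /A /Sv /Sm /= H3.
  - move=> [[H3 H1] H2]; split => //; split => //.
    by rewrite /A /= H3.
by rewrite SC // => l /HL; left.
Qed.

Lemma ICall n : ICprop n.
Proof.
elim: n => [|n IH].
  move=> L k j uL _.
  case: (eqVneq j 1%N) => [->|nj].
    have -> : A 0 1 = setT by apply/seteqP; split.
    by rewrite setTI pr_setT mul1r Ppt.
  have -> : A 0 j = set0.
    by apply/seteqP; split => // t; rewrite /A /= => e; move: nj; rewrite -e eqxx.
  by rewrite set0I pr_set0 mul0r.
move=> L k j uL HL.
rewrite (@R1 n IH L k j uL); last by move=> l /HL.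
have h := @R1 n IH [::] k j is_true_true (fun l (hl : l \in [::]) => ltac:(by rewrite in_nil in hl)).
by rewrite pt_nil setIT big_nil mulr1 in h; rewrite h.
Qed.

Lemma R1' n j : pr (A n.+1 j) = \sum_(j' < (d ^ n).+1) pr (A n j') * (Pp ^+ j')`_j.
Proof.
have h := @R1 n (ICall n) [::] (fun _ => 0%N) j is_true_true (fun l (hl : l \in [::]) => ltac:(by rewrite in_nil in hl)).
by rewrite pt_nil setIT big_nil mulr1 in h.
Qed.

Definition G n (y : R) := \sum_(j < (d ^ n).+1) pr (A n j) * y ^+ j.

Lemma Grec n y : G n.+1 y = G n (Pp.[y]).
Proof.
rewrite /G.
under eq_bigr do rewrite R1' big_distrl.
rewrite exchange_big /=; apply: eq_bigr => -[j' hj'] _ /=.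
rewrite -horner_exp (@horner_coef_wide _ (d ^ n.+1).+1); last first.
  apply: (leq_trans (size_poly_exp_leq _ _)); rewrite ltnS expnS.
  apply: leq_mul; last by rewrite -ltnS.
  have hs : (size Pp <= d.+1)%N by apply: size_poly.
  by case: (size Pp) hs.
rewrite big_distrr /=; apply: eq_bigr => i _; by rewrite mulrA.
Qed.

Lemma G0 y : G 0 y = y.
Proof.
rewrite /G expn0 big_ord_recr big_ord1 /=.
have -> : A 0 0 = set0 by apply/seteqP; split.
have -> : A 0 1 = setT by apply/seteqP; split.
by rewrite pr_set0 pr_setT mul0r add0r mul1r expr1.
Qed.

Lemma Gmono n y y' : 0 <= y -> y <= y' -> G n y <= G n y'.
Proof.
move=> y0 yy; apply: ler_sum => j _; apply: ler_wpM2l; first exact: pr_ge0.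
by apply: lerXn2r => //; rewrite nnegrE //; apply: le_trans yy.
Qed.

Lemma markov n (x lam m : R) : 0 <= lam -> 0 < m ->
  pr [set t | x < (GW_Z xi n t)%:R / m ^+ n] <= expR (- (lam * x)) * G n (expR (lam / m ^+ n)).
Proof.
move=> l0 m0.
have mEv : measurable [set t | x < (GW_Z xi n t)%:R / m ^+ n].
  have -> : [set t | x < (GW_Z xi n t)%:R / m ^+ n] =
      \bigcup_(j in [set j : nat | x < j%:R / m ^+ n]) A n j.
    apply/seteqP; split => t /=; first by move=> H; exists (GW_Z xi n t).
    by move=> [j /= H]; rewrite /A /= => ->.
  by apply: bigcup_measurable => j _; exact: mA.
rewrite (@decomp _ (Bad n) (A n) (d ^ n).+1); first last.
- move=> t _ hb; exists (GW_Z xi n t) => //.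
  by rewrite ltnS leqNgt; apply/negP.
- by move=> a b t /= Ha Hb; rewrite -Ha -Hb.
- exact: PBad.
- exact: mA.
- exact: mBad.
- exact: mEv.
rewrite /G big_distrr /=; apply: ler_sum => j _.
have [xj|xj] := boolP (x < j%:R / m ^+ n).
  have -> : [set t | x < (GW_Z xi n t)%:R / m ^+ n] `&` A n j = A n j.
    apply/seteqP; split => t /=; first by case.
    by move=> H; split => //; rewrite H.
  rewrite -expRM_natl mulrCA -expRD -{1}(mulr1 (pr _)).
  apply: ler_wpM2l; first exact: pr_ge0.
  have h : 0 <= j%:R * (lam / m ^+ n) + - (lam * x).
    rewrite mulrCA -mulrBr; apply: mulr_ge0 => //.
    by rewrite subr_ge0 ltW // mulrC.
  rewrite addrC; move: h; set z := (_ - _); move=> h.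
  by have := expR_ge1Dx z; lra.
have -> : [set t | x < (GW_Z xi n t)%:R / m ^+ n] `&` A n j = set0.
  apply/seteqP; split => t //= [H1 H2]; move: xj; rewrite -H2 H1 //.
rewrite pr_set0; apply: mulr_ge0; first exact: expR_ge0.
by apply: mulr_ge0; [exact: pr_ge0 | apply: exprn_ge0; exact: expR_ge0].
Qed.

Lemma expR_le1 (y : R) : 0 <= y -> expR y <= 1 + y * expR y.
Proof.
move=> y0.
have h2 : (1 - y) * expR y <= expR (- y) * expR y.
  by apply: ler_wpM2r; [exact: expR_ge0 | exact: expR_ge1Dx].
rewrite [X in _ <= X]mulrC expRxMexpNx_1 in h2.
lra.
Qed.

Lemma Pp_bound (m u : R) : m = \sum_(k < d.+1) k%:R * p k -> 0 <= u ->
  0 <= Pp.[expR u] /\ Pp.[expR u] <= expR (m * u * expR (u * d%:R)).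
Proof.
move=> hm u0.
rewrite (@horner_coef_wide _ d.+1); last exact: size_poly.
under eq_bigr do rewrite coefPp.
split.
  apply: sumr_ge0 => a _; apply: mulr_ge0; first exact: pr_ge0.
  by apply: exprn_ge0; exact: expR_ge0.
apply: (le_trans _ (expR_ge1Dx _)).
apply: (@le_trans _ _ (\sum_(a < d.+1) (p a + p a * (a%:R * u * expR (u * d%:R))))).
  apply: ler_sum => -[a ha] _ /=.
  rewrite -{2}(mulr1 (p a)) -mulrDr; apply: ler_wpM2l; first exact: pr_ge0.
  rewrite -expRM_natl.
  have hy : 0 <= a%:R * u by apply: mulr_ge0.
  apply: le_trans; first exact: (expR_le1 _ hy).
  rewrite lerD2l; apply: ler_wpM2l => //.
  rewrite ler_expR mulrC; apply: ler_wpM2l => //.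
  by rewrite ler_nat -ltnS.
rewrite big_split /= sump lerD2l hm big_distrl /=.
rewrite big_distrl /=; apply: ler_sum => a _.
by rewrite !mulrA [p a * _]mulrC.
Qed.

Lemma Gexp n (m u : R) : m = \sum_(k < d.+1) k%:R * p k -> 0 <= m -> 0 <= u ->
  G n (expR u) <= expR (iter n (fun v => m * v * expR (v * d%:R)) u).
Proof.
move=> hm m0; elim: n u => [|n IH] u u0; first by rewrite G0.
rewrite Grec iterSr.
have [h1 h2] := Pp_bound _ _ hm u0.
have hp : 0 <= m * u * expR (u * d%:R).
  by apply: mulr_ge0; [apply: mulr_ge0 | exact: expR_ge0].
apply: (le_trans (Gmono n _ _ h1 h2)).
exact: IH.
Qed.

Lemma iter_bound (m dd lam : R) n : 1 < m -> 0 < dd -> 0 <= lam ->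
  lam * expR 1 * dd = m - 1 ->
  forall k, (k <= n)%N ->
  0 <= iter k (fun v => m * v * expR (v * dd)) (lam / m ^+ n) <=
    lam * (m ^+ k / m ^+ n) * expR (m ^+ k / m ^+ n).
Proof.
move=> m1 dd0 l0 hl; have m0 : 0 < m by lra.
have mn0 : 0 < m ^+ n by apply: exprn_gt0.
elim=> [|k IH] kn /=.
  rewrite expr0; apply/andP; split; first by apply: divr_ge0 => //; exact: ltW.
  rewrite mul1r -[X in X <= _]mulr1; apply: ler_wpM2l.
    by apply: divr_ge0 => //; exact: ltW.
  have hi : 0 < (m ^+ n)^-1 by rewrite invr_gt0.
  by have := expR_ge1Dx (m ^+ n)^-1; lra.
have kn' : (k <= n)%N by apply: ltnW.
have /andP [u0 hu] := IH kn'.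
set u := iter k _ _ in u0 hu *.
set x := m ^+ k / m ^+ n in hu *.
have x0 : 0 < x by apply: divr_gt0 => //; exact: exprn_gt0.
have x1 : x <= 1.
  rewrite /x ler_pdivrMr // mul1r; apply: ler_weXn2l => //; exact: ltW.
have hmx : m ^+ k.+1 / m ^+ n = m * x by rewrite /x exprS mulrA.
rewrite hmx.
have ee : expR x <= expR 1 by rewrite ler_expR.
have hud : u * dd <= x * (m - 1).
  rewrite -hl.
  have : u <= lam * x * expR 1.
    apply: (le_trans hu); apply: ler_wpM2l => //; apply: mulr_ge0 => //; exact: ltW.
  move=> h; have := ler_wpM2r (ltW dd0) h.
  by rewrite (_ : x * (lam * expR 1 * dd) = lam * x * expR 1 * dd) //; ring.
have e2 : expR (u * dd) <= expR (x * (m - 1)) by rewrite ler_expR.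
apply/andP; split.
  by apply: mulr_ge0; [apply: mulr_ge0 => //; exact: ltW | exact: expR_ge0].
have hmx2 : expR (m * x) = expR x * expR (x * (m - 1)).
  by rewrite -expRD; congr expR; ring.
rewrite hmx2.
have h3 : m * u <= m * (lam * x * expR x) by apply: ler_wpM2l => //; exact: ltW.
apply: (@le_trans _ _ (m * (lam * x * expR x) * expR (x * (m - 1)))).
  apply: ler_pM => //.
    by apply: mulr_ge0 => //; exact: ltW.
by rewrite !mulrA [m * lam]mulrC.
Qed.

Lemma mEv n (x m : R) : measurable [set t | x < (GW_Z xi n t)%:R / m ^+ n].
Proof.
have -> : [set t | x < (GW_Z xi n t)%:R / m ^+ n] =
    \bigcup_(j in [set j : nat | x < j%:R / m ^+ n]) A n j.
  apply/seteqP; split => t /=; first by move=> H; exists (GW_Z xi n t).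
  by move=> [j /= H]; rewrite /A /= => ->.
by apply: bigcup_measurable => j _; exact: mA.
Qed.

Lemma final (m : R) (hd : (2 <= d)%N)
  (hmean : m = \sum_(k < d.+1) k%:R * fine (P [set t | xi 0%N 0%N t = k]))
  (hm : 1 < m) :
  let a := 8 * m / (m - 1) in
  forall (r n : nat), (0 < r)%N ->
    (P [set t | (5 * a * d%:R * r%:R < (GW_Z xi n t)%:R / m ^+ n)%R]
    <= (expR (- ((ln 3 - 1) * r%:R)) + expR (- ((2 / 3) * r%:R)))%:E)%E.
Proof.
move=> a r n r0.
rewrite prE; last exact: mEv.
rewrite lee_fin.
set x0 := 5 * a * d%:R * r%:R.
have m0 : 0 < m by lra.
have dpos : 2 <= d%:R :> R by rewrite (ler_nat R 2 d).
have rpos : 1 <= r%:R :> R by rewrite (ler_nat R 1 r).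
pose e : R := expR 1.
have e0 : 0 < e by exact: expR_gt0.
pose lam : R := (m - 1) / (e * d%:R).
have l0 : 0 <= lam.
  by apply: divr_ge0; [lra | apply: mulr_ge0; lra].
have hl : lam * e * d%:R = m - 1.
  rewrite /lam; field; apply/andP; split; apply/negP => /eqP; lra.
have hmk := markov n x0 lam m l0 m0.
have u0 : 0 <= lam / m ^+ n by apply: divr_ge0 => //; apply: exprn_ge0; lra.
have hG := Gexp n m (lam / m ^+ n) hmean (ltW m0) u0.
have /andP [_ hI] := iter_bound m d%:R lam n hm ltac:(lra) l0 hl n (leqnn n).
have mn0 : m ^+ n != 0 by rewrite expf_neq0 //; apply/negP => /eqP; lra.
rewrite divff // mulr1 in hI.
have hb : pr [set t | x0 < (GW_Z xi n t)%:R / m ^+ n] <= expR (lam * e - lam * x0).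
  apply: (le_trans hmk); rewrite addrC expRD.
  apply: ler_wpM2l; first exact: expR_ge0.
  apply: (le_trans hG); rewrite ler_expR; exact: hI.
apply: (le_trans hb).
have e4 : e <= 4.
  have h := expR_le1 (1 / 2) ltac:(lra).
  have h2 : e = expR (1 / 2) * expR (1 / 2) by rewrite -expRD /e; congr expR; lra.
  have := expR_gt0 (1 / 2 : R); nra.
have ln3 : ln 3 <= 2 :> R.
  have h := @le_ln1Dx R 2 ltac:(lra).
  by rewrite (_ : 1 + 2 = 3) in h; last by lra.
have hx : lam * x0 = 40 * m * r%:R / e.
  rewrite /lam /x0 /a; field.
  repeat (apply/andP; split); apply/negP => /eqP; lra.
have h1 : (m - 1) / d%:R <= m - 1.
  rewrite ler_pdivrMr; last lra.
  nra.
have h2 : 10 * m * r%:R <= 40 * m * r%:R / e.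
  rewrite ler_pdivlMr //.
  have : 0 <= m * r%:R by nra.
  nra.
have hle : lam * e = (m - 1) / d%:R.
  rewrite /lam; field; apply/andP; split; apply/negP => /eqP; lra.
have hfin : lam * e - lam * x0 <= - ((ln 3 - 1) * r%:R).
  rewrite hle hx.
  have : 0 <= ln 3 - 1 + 1 :> R.
    have := @ln_ge0 R 3 ltac:(lra); lra.
  nra.
apply: (@le_trans _ _ (expR (- ((ln 3 - 1) * r%:R)))).
  by rewrite ler_expR.
by rewrite lerDl; exact: expR_ge0.
Qed.

End GW.

Theorem mainTheorem5 (R : realType) (dsp : measure_display) (T : measurableType dsp)
  (P : probability T R) (xi : nat -> nat -> T -> nat) (d : nat) (m : R)
  (hd : (2 <= d)%N)
  (hmeas : forall n i k, measurable [set t | xi n i t = k])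
  (hindep : mutually_independent_nat P (fun j => xi j.1 j.2))
  (hident : forall n i k, P [set t | xi n i t = k] = P [set t | xi 0%N 0%N t = k])
  (hsupp : P [set t | (xi 0%N 0%N t <= d)%N] = 1%E)
  (hmean : m = \sum_(k < d.+1) k%:R * fine (P [set t | xi 0%N 0%N t = k]))
  (hm : 1 < m) :
  let a := 8 * m / (m - 1) in
  forall (r n : nat), (0 < r)%N ->
    (P [set t | (5 * a * d%:R * r%:R < (GW_Z xi n t)%:R / m ^+ n)%R]
    <= (expR (- ((ln 3 - 1) * r%:R)) + expR (- ((2 / 3) * r%:R)))%:E)%E.
Proof.
exact: (@final R dsp T P xi hmeas hindep hident d hsupp m hd hmean hm).
Qed.
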